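(* Let $q\in(0,\tfrac12)$ and let $T\sim U(0,1)$, $S\sim U(-1,0)$ be independent. Let $p_3^{SH}$ be the probability that $$P_{T,S}(x)=(T+S-1)x^3+\big(1-T-2S+q(S-1-T)\big)x^2+\big(S+q(T-S)\big)x$$ has exactly three distinct roots in $[0,1]$. Then $$p_3^{SH}=\frac{1}{1-2q}\,\mathrm{Area}(D\cap D_1),$$ where $D=\{(x,y)\in\mathbb{R}^2:\ -1<x<0,\ -\frac{x^2}{4q}-q<y<-q\}$ and $D_1$ is the open quadrilateral with consecutive vertices $A=(-1,-1)$, $B=(-(1-q),-q)$, $O=(0,0)$, $C=(-q,-(1-q))$ (equivalently, $D_1$ is the image of $(-1,0)^2$ under the linear map $(t,s)\mapsto((1-q)t+qs,\ qt+(1-q)s)$).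
   Context: ''Area'' denotes two-dimensional Lebesgue measure. *)

(* Defs.v *)
From HB Require Import structures.
From mathcomp Require Import all_boot all_order all_algebra.
From mathcomp Require Import all_classical all_reals all_analysis.
Set Implicit Arguments. Unset Strict Implicit. Unset Printing Implicit Defensive.
Import Order.TTheory GRing.Theory Num.Theory.
Local Open Scope classical_set_scope.
Local Open Scope ring_scope.

Definition PTS {R : realType} (q t s x : R) : R :=
  (t + s - 1) * x ^+ 3
  + (1 - t - 2 * s + q * (s - 1 - t)) * x ^+ 2
  + (s + q * (t - s)) * x.

Definition three_roots {R : realType} (q t s : R) : Prop :=
  exists x1 x2 x3 : R,
    [/\ 0 <= x1, x1 < x2, x2 < x3 & x3 <= 1] /\
    [/\ PTS q t s x1 = 0, PTS q t s x2 = 0 & PTS q t s x3 = 0] /\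
    (forall x, 0 <= x <= 1 -> PTS q t s x = 0 -> x = x1 \/ x = x2 \/ x = x3).

Definition event3 {R : realType} (q : R) : set (R * R) :=
  [set ts | three_roots q ts.1 ts.2].

Definition regD {R : realType} (q : R) : set (R * R) :=
  [set xy | -1 < xy.1 < 0 /\ - (xy.1 ^+ 2) / (4 * q) - q < xy.2 < - q].

Definition regD1 {R : realType} (q : R) : set (R * R) :=
  [set ((1 - q) * ts.1 + q * ts.2, q * ts.1 + (1 - q) * ts.2) |
     ts in [set ts : R * R | -1 < ts.1 < 0 /\ -1 < ts.2 < 0]].

Lemma lt01 {R : realType} : (0 : R) < 1. Proof. exact: ltr01. Qed.
Lemma ltm10 {R : realType} : (-1 : R) < 0. Proof. by rewrite ltrN10. Qed.

Definition lawTS (R : realType) : set (R * R) -> \bar R :=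
  (uniform_prob (@lt01 R) \x uniform_prob (@ltm10 R))%E.

Definition area (R : realType) : set (R * R) -> \bar R :=
  ((@lebesgue_measure R) \x (@lebesgue_measure R))%E.

(* Main.v *)
Require Import Defs.
From HB Require Import structures.
From mathcomp Require Import all_boot all_order all_algebra.
From mathcomp Require Import all_classical all_reals all_analysis.
From mathcomp Require Import measurable_realfun.
From mathcomp Require Import ring lra.
Import Order.TTheory GRing.Theory Num.Theory.
Local Open Scope classical_set_scope.
Local Open Scope ring_scope.

Lemma leb_aff (R : realType) (b d : R) (S : set R) : 0 < b -> measurable S ->
  lebesgue_measure [set y | S (b * y + d)] = ((b^-1)%:E * lebesgue_measure S)%E.
Proof.
move=> b0 mS.
pose f : measurableTypeR R -> measurableTypeR R := fun y => b * y + d.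
have mf : measurable_fun (setT : set (measurableTypeR R)) f.
  have h : measurable_fun (setT : set R) (fun y : R => b * y + d) by apply: measurable_funD.
  exact: h.
refine (let mu : {measure set (measurableTypeR R) -> \bar R} :=
  mscale (NngNum (normr_ge0 b)) (pushforward lebesgue_measure f) in _).
have key : forall X, measurable X -> lebesgue_measure X = mu X.
  apply: lebesgue_measure_unique => _ [[x1 x2] _ <-].
  have -> : mu `]x1, x2]%classic = ((`|b|)%:E * lebesgue_measure (f @^-1` `]x1, x2]%classic))%E by [].
  have -> : f @^-1` `]x1, x2] = `](x1 - d) / b, (x2 - d) / b]%classic.
    apply/seteqP; split => y; rewrite /f /= !in_itv /= => /andP[h1 h2];
      apply/andP; split.
    - by rewrite ltr_pdivrMr // ltrBlDr mulrC.
    - by rewrite ler_pdivlMr // lerBrDr mulrC.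
    - by move: h1; rewrite ltr_pdivrMr // ltrBlDr mulrC.
    - by move: h2; rewrite ler_pdivlMr // lerBrDr mulrC.
  rewrite !lebesgue_measure_itv /= !lte_fin ltr_pM2r ?invr_gt0 // ltrBlDr subrK.
  case: ifP => _; last by rewrite mule0.
  rewrite -EFinD -EFinM gtr0_norm //; congr (_%:E); field; exact: lt0r_neq0.
rewrite [in RHS]key //.
have -> : mu S = ((`|b|)%:E * lebesgue_measure (f @^-1` S))%E by [].
rewrite gtr0_norm // muleA -EFinM mulVf ?mul1e //.
exact: lt0r_neq0.
Unshelve. all: exact: mf.
Qed.

Lemma measV {R : realType} (k b c : R) (A : set (R * R)) : measurable A ->
  measurable [set p : R * R | A (p.1, k * p.1 + b * p.2 + c)].
Proof.
move=> mA.
pose g := fun p : R * R => (p.1, k * p.1 + b * p.2 + c).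
have mg : measurable_fun setT g.
  apply: measurable_fun_pair => //.
  apply: measurable_funD => //; apply: measurable_funD => //.
  - by apply: measurable_funM => //; exact: measurable_fst.
  - by apply: measurable_funM => //; exact: measurable_snd.
have := mg measurableT A mA; rewrite setTI.
by [].
Qed.

Lemma areaV {R : realType} (k b c : R) (A : set (R * R)) : 0 < b -> measurable A ->
  area [set p : R * R | A (p.1, k * p.1 + b * p.2 + c)] = ((b^-1)%:E * area A)%E.
Proof.
move=> b0 mA; rewrite /area /product_measure1 /=.
under eq_integral => x _.
  have -> : xsection [set p : R * R | A (p.1, k * p.1 + b * p.2 + c)] x =
       [set y | xsection A x (b * y + (k * x + c))].
    have E y : b * y + (k * x + c) = k * x + b * y + c by ring.
    by apply/seteqP; split => y; rewrite /xsection /= !inE /= E.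
  rewrite leb_aff //; last exact: measurable_xsection.
  over.
rewrite ge0_integralZl //.
all: first [exact: measurable_fun_xsection | (by move=> x _; apply: measure_ge0; exact: measurable_xsection) | (by rewrite lee_fin invr_ge0; exact: ltW)].
Qed.

Lemma measS {R : realType} (A : set (R * R)) : measurable A ->
  measurable [set p : R * R | A (p.2, p.1)].
Proof.
move=> mA.
pose g := fun p : R * R => (p.2, p.1).
have mg : measurable_fun setT g.
  by apply: measurable_fun_pair => //.
have := mg measurableT A mA; rewrite setTI.
by [].
Qed.

Lemma area_swap {R : realType} (A : set (R * R)) : measurable A ->
  area [set p : R * R | A (p.2, p.1)] = area A.
Proof.
move=> mA.
have -> : area A = ((@lebesgue_measure R) \x^ (@lebesgue_measure R))%E A.
  apply: product_measure_unique => // X Y mX mY.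
  exact: product_measure2E.
rewrite /area /product_measure1 /product_measure2 /=.
apply: eq_integral => x _ /=.
congr (lebesgue_measure _).
Qed.

Lemma areaH {R : realType} (k b c : R) (A : set (R * R)) : 0 < b -> measurable A ->
  area [set p : R * R | A (b * p.1 + k * p.2 + c, p.2)] = ((b^-1)%:E * area A)%E.
Proof.
move=> b0 mA.
have mA' := measS A mA.
have -> : [set p : R * R | A (b * p.1 + k * p.2 + c, p.2)] =
   [set p : R * R | [set p : R * R | (fun p : R * R => A (p.2, p.1)) (p.1, k * p.1 + b * p.2 + c)] (p.2, p.1)].
  apply/seteqP; split => p /=.
  - by rewrite (_ : k * p.2 + b * p.1 + c = b * p.1 + k * p.2 + c) //; ring.
  - by rewrite (_ : k * p.2 + b * p.1 + c = b * p.1 + k * p.2 + c) //; ring.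
rewrite area_swap; last exact: (measV k b c _ mA').
rewrite -(area_swap A mA); exact: (areaV k b c _ b0 mA').
Qed.

Definition Ac {R : realType} (t s : R) := t + s - 1.
Definition Bc {R : realType} (q t s : R) := 1 - t - 2 * s + q * (s - 1 - t).
Definition Cc {R : realType} (q t s : R) := s + q * (t - s).
Definition Gset {R : realType} (q : R) : set (R * R) :=
  [set p | [/\ Ac p.1 p.2 < 0, Cc q p.1 p.2 < 0,
     0 < Bc q p.1 p.2 ^+ 2 - 4 * Ac p.1 p.2 * Cc q p.1 p.2,
     0 < Bc q p.1 p.2 & Bc q p.1 p.2 + 2 * Ac p.1 p.2 < 0]].

Lemma PTS_fact {R : realType} (q t s x : R) :
  PTS q t s x = x * (Ac t s * x ^+ 2 + Bc q t s * x + Cc q t s).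
Proof. rewrite /PTS /Ac /Bc /Cc; ring. Qed.

Lemma Q1 {R : realType} (q t s : R) : Ac t s + Bc q t s + Cc q t s = - q.
Proof. rewrite /Ac /Bc /Cc; ring. Qed.

Lemma three_rootsP {R : realType} (q t s : R) : 0 < q ->
  three_roots q t s <-> Gset q (t, s).
Proof.
move=> q0.
have h1 := Q1 q t s.
rewrite /Gset /=.
set a := Ac t s; set b := Bc q t s; set c := Cc q t s.
have hP : forall x, PTS q t s x = x * (a * x ^+ 2 + b * x + c) by move=> x; exact: PTS_fact.
split.
- move=> [x1 [x2 [x3 [[h01 h12 h23 h31] [[P1 P2 P3] _]]]]].
  have x2p : 0 < x2 by lra.
  have x3p : 0 < x3 by lra.
  have Q2 : a * x2 ^+ 2 + b * x2 + c = 0.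
    by move: P2; rewrite hP => /eqP; rewrite mulf_eq0 (gt_eqF x2p) /= => /eqP.
  have Q3 : a * x3 ^+ 2 + b * x3 + c = 0.
    by move: P3; rewrite hP => /eqP; rewrite mulf_eq0 (gt_eqF x3p) /= => /eqP.
  have x31 : x3 < 1.
    rewrite lt_neqAle h31 andbT; apply/eqP => e; move: P3; rewrite e hP.
    rewrite expr1n !mulr1 mul1r h1 => /eqP; rewrite oppr_eq0; lra.
  have hb : b = - a * (x2 + x3).
    have E : (x2 - x3) * (a * (x2 + x3) + b) =
        (a * x2 ^+ 2 + b * x2 + c) - (a * x3 ^+ 2 + b * x3 + c) by ring.
    move: E; rewrite Q2 Q3 subrr => /eqP; rewrite mulf_eq0 => /orP[/eqP|/eqP]; lra.
  have hc : c = a * x2 * x3.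
    move: Q2; rewrite hb; lra.
  have hp : 0 < (1 - x2) * (1 - x3) by apply: mulr_gt0; lra.
  have ha : a < 0.
    have : a * ((1 - x2) * (1 - x3)) = a + b + c by rewrite hc hb; ring.
    rewrite h1; nra.
  have hx : 0 < x2 * x3 by apply: mulr_gt0.
  split.
  - exact: ha.
  - rewrite hc -mulrA; nra.
  - have -> : b ^+ 2 - 4 * a * c = (a * (x2 - x3)) ^+ 2 by rewrite hc hb; ring.
    rewrite exprn_even_gt0 //= mulf_eq0 negb_or; apply/andP; split; apply/eqP; lra.
  - rewrite hb; nra.
  - rewrite hb; nra.
move=> [ha hc hd hb hba].
set d := b ^+ 2 - 4 * a * c in hd.
set sd := Num.sqrt d.
have sd2 : sd ^+ 2 = d by rewrite sqr_sqrtr // ltW.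
have sd0 : 0 < sd by rewrite sqrtr_gt0.
have sdb : sd < b.
  rewrite -(ltr_pXn2r (n := 2)) // ?nnegrE ?ltW // sd2 /d; nra.
have sdb2 : sd < - 2 * a - b.
  rewrite -(ltr_pXn2r (n := 2)) // ?nnegrE ?ltW //; try lra.
  have haq : a * (a + b + c) = - (a * q) by rewrite h1; ring.
  rewrite sd2 /d; nra.
have a0 : a != 0 by rewrite lt_eqF.
have a2 : 0 < - 2 * a by lra.
set r1 := (b - sd) / (- 2 * a).
set r2 := (b + sd) / (- 2 * a).
have e1 : 2 * a * r1 = - (b - sd) by rewrite /r1; field; rewrite ?mulf_neq0 ?oppr_eq0 //.
have e2 : 2 * a * r2 = - (b + sd) by rewrite /r2; field; rewrite ?mulf_neq0 ?oppr_eq0 //.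
have fac : forall x, 4 * a * (a * x ^+ 2 + b * x + c) = 4 * a ^+ 2 * ((x - r1) * (x - r2)).
  move=> x.
  have -> : 4 * a ^+ 2 * ((x - r1) * (x - r2)) = (2 * a * x - 2 * a * r1) * (2 * a * x - 2 * a * r2) by ring.
  rewrite e1 e2.
  have -> : (2 * a * x - - (b - sd)) * (2 * a * x - - (b + sd)) = (2 * a * x + b) ^+ 2 - sd ^+ 2 by ring.
  rewrite sd2 /d; ring.
have Qz : forall x, a * x ^+ 2 + b * x + c = 0 <-> x = r1 \/ x = r2.
  move=> x; split.
  - move=> h; have := fac x; rewrite h mulr0 => /esym/eqP.
    rewrite mulf_eq0 => /orP[|].
    + by rewrite mulf_eq0 sqrf_eq0 (negbTE a0) orbF => /eqP; lra.
    + by rewrite mulf_eq0 => /orP[/eqP|/eqP] ?; [left|right]; lra.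
  - move=> h; apply/eqP.
    have : 4 * a * (a * x ^+ 2 + b * x + c) = 0.
      by rewrite fac; case: h => ->; rewrite subrr ?mul0r ?mulr0.
    move/eqP; rewrite mulf_eq0 => /orP[|//]; rewrite mulf_eq0 (negbTE a0) orbF => /eqP; lra.
have r1p : 0 < r1 by rewrite /r1 divr_gt0 // subr_gt0.
have r12 : r1 < r2 by rewrite /r1 /r2 ltr_pM2r ?invr_gt0 //; lra.
have r21 : r2 < 1 by rewrite /r2 ltr_pdivrMr //; lra.
exists 0, r1, r2; split; first by split => //; lra.
split.
  split; first by rewrite hP mul0r.
  - by rewrite hP; have [_ ->] := Qz r1; [rewrite mulr0 | left].
  - by rewrite hP; have [_ ->] := Qz r2; [rewrite mulr0 | right].
move=> x _; rewrite hP => /eqP; rewrite mulf_eq0 => /orP[/eqP -> | /eqP /Qz]; first by left.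
by right.
Qed.

Ltac mfun := repeat first [ apply: measurable_funD | apply: measurable_funB
  | apply: measurable_funM | apply: measurable_funX | apply: measurable_cst | apply: measurable_funN
  | exact: measurable_fst | exact: measurable_snd | done ].

Lemma meas_lt0 {R : realType} (f : R * R -> R) : measurable_fun setT f ->
  measurable [set p : R * R | f p < 0].
Proof.
move=> mf; have := mf measurableT _ (@measurable_itv _ `]-oo, 0[); rewrite setTI.
congr measurable; apply/seteqP; split => p /=; by rewrite in_itv.
Qed.

Lemma meas_Gset {R : realType} (q : R) : measurable (Gset q).
Proof.
have -> : Gset q = [set p : R * R | Ac p.1 p.2 < 0] `&` [set p | Cc q p.1 p.2 < 0]
  `&` [set p | - (Bc q p.1 p.2 ^+ 2 - 4 * Ac p.1 p.2 * Cc q p.1 p.2) < 0]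
  `&` [set p | - Bc q p.1 p.2 < 0] `&` [set p | Bc q p.1 p.2 + 2 * Ac p.1 p.2 < 0].
  apply/seteqP; split => p /=.
  - by case=> h1 h2 h3 h4 h5; rewrite !oppr_lt0.
  - by rewrite !oppr_lt0 => -[[[[h1 h2] h3] h4] h5].
rewrite /Ac /Bc /Cc.
repeat apply: measurableI; apply: meas_lt0; mfun.
Qed.

Lemma unif2 {R : realType} (S : set R) : measurable S ->
  uniform_prob (@ltm10 R) S = lebesgue_measure (S `&` `]-1, 0[).
Proof.
move=> mS.
have mI : measurable_fun (setT : set (measurableTypeR R)) (fun y => (\1_S y : R)%:E).
  exact/measurable_EFinP/measurable_indic.
rewrite -[in LHS](setIT S) -(integral_indic (uniform_prob (@ltm10 R)) measurableT mS).
rewrite integral_uniform //.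
rewrite sub0r opprK invr1 mul1e integral_itv_bndoo; last exact: measurable_funS mI.
by rewrite integral_indic.
Qed.

Lemma lawTS_area {R : realType} (G : set (R * R)) : measurable G ->
  lawTS G = area (G `&` (`]0, 1[ `*` `]-1, 0[)).
Proof.
move=> mG.
rewrite /lawTS /area /product_measure1 /=.
rewrite integral_uniform //.
rewrite subr0 invr1 mul1e integral_itv_bndoo; last first.
  apply: (measurable_funS measurableT) => //; exact: measurable_fun_xsection.
rewrite integral_mkcond; apply: eq_integral => x _ /=.
rewrite patchE; case: ifPn => [xi|xni].
- rewrite unif2; last exact: measurable_xsection.
  congr lebesgue_measure; apply/seteqP; split => y /=; rewrite /xsection /= !inE.
  + by move=> [h1 h2]; split => //; split => //; move: xi; rewrite inE.
  + by move=> [h1 [h2 h3]].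
- have -> : xsection (G `&` `]0, 1[ `*` `]-1, 0[) x = set0.
    apply/seteqP; split => y //=; rewrite /xsection /= inE => -[_ [h _]].
    by move: xni => /negP; apply; rewrite inE.
  by rewrite measure0.
have -> : (fun x => uniform_prob (@ltm10 R) (xsection G x)) =
  (fun x => lebesgue_measure (xsection (G `&` (setT `*` `]-1, 0[)) x)).
  apply/funext => x; rewrite unif2; last exact: measurable_xsection.
  congr lebesgue_measure; apply/seteqP; split => y /=; rewrite /xsection /= !inE.
  + by move=> [h1 h2]; split => //; split.
  + by move=> [h1 [h2 h3]].
apply: measurable_fun_xsection; apply: measurableI => //; exact: measurableX.
Qed.

Lemma measH {R : realType} (k b c : R) (A : set (R * R)) : measurable A ->
  measurable [set p : R * R | A (b * p.1 + k * p.2 + c, p.2)].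
Proof.
move=> mA.
pose g := fun p : R * R => (b * p.1 + k * p.2 + c, p.2).
have mg : measurable_fun setT g.
  apply: measurable_fun_pair => //.
  apply: measurable_funD => //; apply: measurable_funD => //.
  - by apply: measurable_funM => //; exact: measurable_fst.
  - by apply: measurable_funM => //; exact: measurable_snd.
have := mg measurableT A mA; rewrite setTI.
by [].
Qed.

Section Main.
Variable R : realType.
Variable q : R.
Hypothesis hq0 : 0 < q.
Hypothesis hq1 : q < 1 / 2.

Let q2 : 2 * q < 1. Proof. by move: hq1; rewrite ltr_pdivlMr // mulrC. Qed.
Let m := 1 - 2 * q.
Let m0 : 0 < m. Proof. rewrite /m; have := q2; lra. Qed.
Let q1 : 0 < 1 - q. Proof. have := q2; lra. Qed.
Let mn : m != 0. Proof. exact: lt0r_neq0. Qed.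
Let q1n : 1 - q != 0. Proof. exact: lt0r_neq0. Qed.

Definition uf (x y : R) := ((1 - q) * x - q * y) / m.
Definition vf (x y : R) := (- q * x + (1 - q) * y) / m.

Lemma regD1P x y : regD1 q (x, y) <-> (-1 < uf x y < 0 /\ -1 < vf x y < 0).
Proof.
have := mn; have := q1n => q1n' mn'.
rewrite /regD1 /=; split.
- case=> [[u v]] /= [hu hv] [<- <-].
  have -> : uf ((1 - q) * u + q * v) (q * u + (1 - q) * v) = u by rewrite /uf /m; field.
  have -> : vf ((1 - q) * u + q * v) (q * u + (1 - q) * v) = v by rewrite /vf /m; field.
  by split.
- move=> [hu hv]; exists (uf x y, vf x y) => //=.
  congr (_, _); rewrite /uf /vf /m; field.
all: exact: mn'.
Qed.

Lemma cond_uv u v : -1 < u < 0 -> -1 < v < 0 ->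
  (regD q ((1 - q) * u + q * v, q * u + (1 - q) * v) <-> Gset q (u + 1, v)).
Proof.
move=> /andP[u1 u0] /andP[v1 v0].
have qq2 := q2.
have qq0 := hq0.
have qq1 : 0 < 1 - q by lra.
set X := (1 - q) * u + q * v; set Y := q * u + (1 - q) * v.
have hX1 : -1 < X.
  have h1 : 0 < (1 - q) * (u + 1) by apply: mulr_gt0; lra.
  have h2 : 0 < q * (v + 1) by apply: mulr_gt0; lra.
  rewrite /X; nra.
have hX0 : X < 0.
  have h1 : 0 < (1 - q) * (- u) by apply: mulr_gt0; lra.
  have h2 : 0 < q * (- v) by apply: mulr_gt0; lra.
  rewrite /X; nra.
have eC : Cc q (u + 1) v = Y + q by rewrite /Cc /Y; ring.
have eA : Ac (u + 1) v = u + v by rewrite /Ac; ring.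
have eB : Bc q (u + 1) v = - X - 2 * Y - 2 * q by rewrite /Bc /X /Y; ring.
have eD : Bc q (u + 1) v ^+ 2 - 4 * Ac (u + 1) v * Cc q (u + 1) v = X ^+ 2 + 4 * q * (Y + q).
  by rewrite eB eA eC /X /Y; ring.
have eY : Y - (- X ^+ 2 / (4 * q) - q) = (X ^+ 2 + 4 * q * (Y + q)) / (4 * q).
  by field; exact: lt0r_neq0.
have q4 : 0 < 4 * q by lra.
rewrite /regD /Gset /=; split.
- move=> [_ /andP[hy1 hy2]].
  have hd : 0 < X ^+ 2 + 4 * q * (Y + q).
    have : 0 < Y - (- X ^+ 2 / (4 * q) - q) by lra.
    by rewrite eY pmulr_lgt0 // invr_gt0.
  rewrite eD eC eA eB; have eXY : X + Y = u + v by rewrite /X /Y; ring.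
  split; lra.
- move=> [hA hC hD hB hBA].
  move: hD hC; rewrite eD eC => hD hC.
  split; first by apply/andP; split.
  apply/andP; split; last by lra.
  have : 0 < Y - (- X ^+ 2 / (4 * q) - q) by rewrite eY divr_gt0.
  lra.
Qed.

Lemma setEq :
  regD q `&` regD1 q =
  [set p : R * R | [set p : R * R | (Gset q `&` (`]0, 1[ `*` `]-1, 0[))
      ((1 - q)^-1 * p.1 + (- q / (1 - q)) * p.2 + 1, p.2)]
     (p.1, (- q / m) * p.1 + ((1 - q) / m) * p.2 + 0)].
Proof.
have qq2 := q2; have qq0 := hq0; have mn' := mn; have q1n' := q1n.
apply/seteqP; split => -[x y] /=.
- have es : - q / m * x + (1 - q) / m * y + 0 = vf x y by rewrite /vf; field.
  have et : (1 - q)^-1 * x + - q / (1 - q) * vf x y + 1 = uf x y + 1.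
    by rewrite /vf /uf /m; field; apply/andP; split.
  rewrite es et.
  move=> [hD /regD1P [hu hv]].
  have exy : (x, y) = ((1 - q) * uf x y + q * vf x y, q * uf x y + (1 - q) * vf x y).
    by congr (_, _); rewrite /uf /vf /m; field.
  rewrite exy in hD.
  have hG := (cond_uv (uf x y) (vf x y) hu hv).1 hD.
  split => //; split => /=; rewrite in_itv /=; move: hu hv => /andP[? ?] /andP[? ?];
    apply/andP; split; lra.
- have es : - q / m * x + (1 - q) / m * y + 0 = vf x y by rewrite /vf; field.
  have et : (1 - q)^-1 * x + - q / (1 - q) * vf x y + 1 = uf x y + 1.
    by rewrite /vf /uf /m; field; apply/andP; split.
  rewrite es et.
  move=> [hG [/= hu hv]].
  move: hu hv; rewrite !in_itv /= => /andP[u1 u2] /andP[v1 v2].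
  have hu : -1 < uf x y < 0 by apply/andP; split; lra.
  have hv : -1 < vf x y < 0 by apply/andP; split; lra.
  have exy : (x, y) = ((1 - q) * uf x y + q * vf x y, q * uf x y + (1 - q) * vf x y).
    by congr (_, _); rewrite /uf /vf /m; field.
  split; last by apply/regD1P.
  rewrite exy; exact: (cond_uv (uf x y) (vf x y) hu hv).2.
Qed.

End Main.

Theorem proposition2p2 (R : realType) (q : R) (hq0 : 0 < q) (hq1 : q < 1 / 2) :
  lawTS (event3 q) = (((1 - 2 * q)^-1)%:E * area (regD q `&` regD1 q))%E.
Proof.
have q2 : 2 * q < 1 by move: hq1; rewrite ltr_pdivlMr // mulrC.
have m0 : 0 < 1 - 2 * q by lra.
have q1 : 0 < 1 - q by lra.
have -> : event3 q = Gset q.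
  by apply/seteqP; split => -[t s]; rewrite /event3 /= three_rootsP.
have mG := meas_Gset q.
have mGO : measurable (Gset q `&` (`]0, 1[ `*` `]-1, 0[)).
  by apply: measurableI => //; exact: measurableX.
rewrite lawTS_area // (setEq R q hq0 hq1).
rewrite areaV; last 2 first.
- by rewrite divr_gt0.
- exact: measH.
rewrite areaH //; last by rewrite invr_gt0.
rewrite !muleA -!EFinM.
have -> : (1 - 2 * q)^-1 * ((1 - q) / (1 - 2 * q))^-1 * (1 - q)^-1^-1 = 1.
  by field; apply/andP; split; apply: lt0r_neq0.
by rewrite mul1e.
Qed.
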